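(* Let $m$ and $n_0$ be positive integers and $N=mn_0+m$. For $1\le\ell\le m$ let $R_\ell=\{m+(\ell-1)n_0+1,\dots,m+\ell n_0\}$. For $1\le j\le m$ and $1\le i_1<\cdots<i_j\le m$ let $X_{i_1,\dots,i_j}=\{Z\subseteq[N]:\ \{i_1,\dots,i_j\}\cup R_1\cup\cdots\cup R_{j-1}\subseteq Z\subseteq \{i_1,\dots,i_j\}\cup R_1\cup\cdots\cup R_j\}$. For any coloring $c$ of $\mathcal{B}_N$, if $\mathcal{B}_N$ contains no rainbow induced copy of $\mathcal{B}_m$, then there exist $j$ and $1\le i_1<\cdots<i_j\le m$ such that the restriction of $c$ to $X_{i_1,\dots,i_j}$ uses at most $2^m-1$ colors.
   Context: $\mathcal{B}_N$ is the Boolean lattice of subsets of $[N]$ under inclusion. A coloring assigns a color to each set (any number of colors allowed). An induced copy of a poset $\mathcal{P}$ in $\mathcal{B}_N$ is the image of an injection $f$ with $f(X)\subseteq f(Y)$ iff $X\le Y$; it is rainbow if its sets have pairwise distinct colors. *)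

(* Defs.v *)
(* Ground set [N] = {1..N} is modelled by 'I_N, the element
   k+1 of [N] being represented by the ordinal of value k (0-based shift). *)
From mathcomp Require Import all_boot all_order.
Set Implicit Arguments. Unset Strict Implicit. Unset Printing Implicit Defensive.

Definition induced_copy (m N : nat) (f : {set 'I_m} -> {set 'I_N}) : Prop :=
  injective f /\ forall X Y : {set 'I_m}, (f X \subset f Y) = (X \subset Y).

Definition rainbow (N m : nat) (C : eqType) (c : {set 'I_N} -> C)
    (f : {set 'I_m} -> {set 'I_N}) : Prop :=
  injective (fun X => c (f X)).

Definition has_rainbow_copy (m N : nat) (C : eqType) (c : {set 'I_N} -> C) : Prop :=
  exists f : {set 'I_m} -> {set 'I_N}, induced_copy f /\ rainbow c f.

Definition ncolors (N : nat) (C : eqType) (c : {set 'I_N} -> C)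
    (F : {set {set 'I_N}}) : nat :=
  size (undup [seq c Z | Z <- enum F]).

(* R_1 ∪ ... ∪ R_k = {m+1, ..., m+k n0} (1-based), i.e. values m .. m+k*n0-1 (0-based). *)
Definition Runion (N m n0 k : nat) : {set 'I_N} :=
  [set x : 'I_N | (m <= x) && (x < m + k * n0)].

(* X_{i_1..i_j} for I = {i_1,...,i_j} (0-based, subset of {0..m-1}), j = #|I|. *)
Definition Xfam (N m n0 : nat) (I : {set 'I_N}) : {set {set 'I_N}} :=
  [set Z : {set 'I_N} | (I :|: Runion N m n0 (#|I| - 1)) \subset Z &
                        Z \subset (I :|: Runion N m n0 #|I|)].

(* Main.v *)
Require Import Defs.
From mathcomp Require Import all_boot all_order.
From Stdlib Require Import Classical.

Section Aux.
Variables (N : nat) (C : eqType) (c : {set 'I_N} -> C).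

Lemma newcolor (F : {set {set 'I_N}}) (U : seq C) :
  size U < ncolors c F -> exists2 Z, Z \in F & c Z \notin U.
Proof.
move=> hU; case: (classic (exists2 Z, Z \in F & c Z \notin U)) => // H; exfalso; move: hU; apply/negP; rewrite -leqNgt.
apply: uniq_leq_size; first exact: undup_uniq.
move=> x; rewrite mem_undup => /mapP [Z]; rewrite mem_enum => ZF ->.
by case: (boolP (c Z \in U)) => // h; exfalso; apply: H; exists Z.
Qed.

Lemma greedy (T : eqType) (F : T -> {set {set 'I_N}}) (s : seq T) :
  forall U : seq C,
  (forall t, t \in s -> size U + size s <= ncolors c (F t)) ->
  exists g : T -> {set 'I_N}, [/\ (forall t, t \in s -> g t \in F t),
    (forall t, t \in s -> c (g t) \notin U) &
    {in s &, injective (fun t => c (g t))}].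
Proof.
elim: s => [|t s IH] U hF.
  by exists (fun _ => set0); split.
have [Z ZF ZU] : exists2 Z, Z \in F t & c Z \notin U.
  apply: newcolor; apply: leq_trans (hF t (mem_head _ _)).
  by rewrite /= addnS ltnS leq_addr.
have [|g [g1 g2 g3]] := IH (c Z :: U).
  by move=> x xs; rewrite /= addSn -addnS; apply: hF; rewrite inE xs orbT.
exists (fun x => if x == t then Z else g x); split.
- by move=> x; rewrite inE; case: eqP => [->|_] //= /g1.
- move=> x; rewrite inE; case: eqP => //= _ /g2; rewrite inE negb_or.
  by case/andP.
- move=> x y; rewrite !inE /=.
  case: (eqVneq x t) => [->|hx]; case: (eqVneq y t) => [->|hy] //= xs ys.
  + by move=> e; move: (g2 y ys); rewrite -e mem_head.
  + by move=> e; move: (g2 x xs); rewrite e mem_head.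
  + by apply: g3.
Qed.
End Aux.

Theorem lemma4p1 (m n0 N : nat) (hm : 0 < m) (hn0 : 0 < n0) (hN : N = m * n0 + m)
    (C : eqType) (c : {set 'I_N} -> C) :
  ~ has_rainbow_copy m c ->
  exists (j : nat) (I : {set 'I_N}),
    [/\ 1 <= j <= m, #|I| = j, (forall x : 'I_N, x \in I -> x < m) &
        ncolors c (@Xfam N m n0 I) <= 2 ^ m - 1].
Proof.
move=> hno; apply: NNPP => hex; apply: hno.
have hmN : m <= N by rewrite hN leq_addl.
pose e : 'I_m -> 'I_N := widen_ord hmN.
have einj : injective e by move=> x y h; apply: val_inj; exact: (congr1 val h).
pose F (S : {set 'I_m}) := @Xfam N m n0 (e @: S).
pose s := enum (powerset [set: 'I_m] :\ set0).
have mems S : (S \in s) = (S != set0).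
  by rewrite mem_enum !inE subsetT andbT.
have sizes : size s = 2 ^ m - 1.
  rewrite -cardE; have := cardsD1 set0 (powerset [set: 'I_m]).
  by rewrite card_powerset cardsT card_ord powersetE sub0set add1n => ->; rewrite subn1.
have hF : forall S, S \in s -> size [:: c set0] + size s <= ncolors c (F S).
  move=> S; rewrite mems => S0; rewrite sizes /= add1n subn1 prednK ?expn_gt0 //.
  case: (leqP (2 ^ m) (ncolors c (F S))) => // hlt; exfalso; apply: hex.
  exists #|S|, (e @: S); split.
  - by rewrite card_gt0 S0 /=; apply: leq_trans (max_card _) _; rewrite card_ord.
  - by rewrite card_imset.
  - by move=> x /imsetP [y _ ->] /=.
  - by rewrite subn1 -ltnS prednK ?expn_gt0.
have [g [g1 g2 g3]] := @greedy N C c _ F s _ hF.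
pose f S := if S == set0 then set0 else g S.
have key S x : (e x \in f S) = (x \in S).
  rewrite /f; case: eqP => [->|/eqP S0]; first by rewrite !inE.
  have := g1 S; rewrite mems S0 => /(_ isT); rewrite inE => /andP [h1 h2].
  apply/idP/idP => [hx|hx]; last first.
    by apply: (subsetP h1); rewrite inE imset_f.
  move: (subsetP h2 _ hx); rewrite !inE /= [m <= _]leqNgt ltn_ord /= orbF.
  by rewrite mem_imset.
have Rmono k k' : k <= k' -> @Runion N m n0 k \subset @Runion N m n0 k'.
  move=> kk; apply/subsetP => x; rewrite !inE => /andP [-> h] /=.
  by apply: leq_trans h _; rewrite leq_add2l leq_mul2r kk orbT.
have sub X Y : (f X \subset f Y) = (X \subset Y).
  apply/idP/idP => [h|h].
    by apply/subsetP => x; rewrite -!key; apply: (subsetP h).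
  rewrite {1}/f; case: eqP => [_|/eqP X0]; first exact: sub0set.
  case: (eqVneq X Y) => [eXY|XY]; first by rewrite -eXY /f (negbTE X0).
  have XpY : X \proper Y by rewrite properEneq XY h.
  have Y0 : Y != set0.
    by rewrite -card_gt0 (leq_ltn_trans _ (proper_card XpY)).
  rewrite /f (negbTE Y0).
  have := g1 X; rewrite mems X0 => /(_ isT); rewrite inE => /andP [_ h2].
  have := g1 Y; rewrite mems Y0 => /(_ isT); rewrite inE => /andP [h1 _].
  apply: subset_trans h2 (subset_trans _ h1).
  rewrite card_imset // card_imset //.
  apply: setUSS; first exact: imsetS.
  by apply: Rmono; rewrite -ltnS subn1 prednK ?proper_card // card_gt0.
exists f; split; first split.
- move=> X Y fXY; apply/eqP; rewrite eqEsubset -!sub fXY subxx //.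
- by [].
- move=> X Y; rewrite /f; case: eqP => [->|/eqP X0]; case: eqP => [->|/eqP Y0] //=.
  + by move=> ce; move: (g2 Y); rewrite mems Y0 => /(_ isT); rewrite -ce mem_head.
  + by move=> ce; move: (g2 X); rewrite mems X0 => /(_ isT); rewrite ce mem_head.
  + by apply: g3; rewrite mems.
Qed.
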